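(* Let $A\in\mathbb{R}^{n\times n}$ be symmetric positive definite, $M_0\in\mathbb{R}^{n\times n}$, $R_0=I_n-AM_0$ and $G_0=-AR_0$. For $i\ge1$ let $\mathcal{K}_i(A^2,G_0)=\mathrm{span}\{G_0,A^2G_0,\dots,A^{2(i-1)}G_0\}$. Then a matrix $M_i\in M_0+\mathcal{K}_i(A^2,G_0)$ satisfies $R_i:=I_n-AM_i\perp\mathcal{K}_i(A^2,G_0)$ if and only if $$\|A^{-1}-M_i\|_{F,A}=\min_{M\in M_0+\mathcal{K}_i(A^2,G_0)}\|A^{-1}-M\|_{F,A}.$$ In particular, the NCG iterates (which satisfy the former condition) minimize the Frobenius $A$-norm of the error over $M_0+\mathcal{K}_i(A^2,G_0)$.
   Context: The Frobenius inner product is $(X,Y)_F=\operatorname{tr}(X^TY)$ and $\perp$ denotes orthogonality with respect to it. The Frobenius inner product weighted by $A$ is $(X,Y)_{F,A}:=(AX,Y)_F$, with induced norm $\|X\|_{F,A}:=(X,X)_{F,A}^{1/2}$. The NCG method: $R_i=I_n-AM_i$, $G_i=-AR_i$, $P_0=-G_0$; for $i\ge1$, $P_i\in -G_i+\mathrm{span}\{P_{i-1}\}$ with $(P_i,AP_{i-1})_F=0$; for $i\ge0$, $M_{i+1}\in M_i+\mathrm{span}\{P_i\}$ with $(R_{i+1},P_i)_F=0$ (no breakdown assumed). *)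

(* Defs.v *)
From HB Require Import structures.
From mathcomp Require Import all_boot all_order all_algebra.
Set Implicit Arguments. Unset Strict Implicit. Unset Printing Implicit Defensive.
Import Order.TTheory GRing.Theory Num.Theory.
Local Open Scope ring_scope.

Definition frob {R : rcfType} {n : nat} (X Y : 'M[R]_n) : R := \tr (X^T *m Y).

Definition frobA {R : rcfType} {n : nat} (A X Y : 'M[R]_n) : R := frob (A *m X) Y.

Definition normFA {R : rcfType} {n : nat} (A X : 'M[R]_n) : R :=
  Num.sqrt (frobA A X X).

Definition spd {R : rcfType} {n : nat} (A : 'M[R]_n) : Prop :=
  A^T = A /\ forall x : 'cV[R]_n, x != 0 -> 0 < (x^T *m A *m x) 0 0.

Definition in_krylov2 {R : rcfType} {n : nat} (A G : 'M[R]_n) (i : nat)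
    (X : 'M[R]_n) : Prop :=
  exists c : 'I_i -> R, X = \sum_(k < i) c k *: ((A *m A) ^+ k *m G).

Definition perp_krylov2 {R : rcfType} {n : nat} (A G : 'M[R]_n) (i : nat)
    (Y : 'M[R]_n) : Prop :=
  forall X, in_krylov2 A G i X -> frob Y X = 0.

(* Main.v *)
Require Import Defs.
From HB Require Import structures.
From mathcomp Require Import all_boot all_order all_algebra.
From mathcomp Require Import ring lra.
Import Order.TTheory GRing.Theory Num.Theory.
Local Open Scope ring_scope.
Set Implicit Arguments. Unset Strict Implicit.

Section Aux.
Variables (R : rcfType) (n : nat).
Implicit Types X Y Z A : 'M[R]_n.

Lemma frobDr X Y Z : frob X (Y + Z) = frob X Y + frob X Z.
Proof. by rewrite /frob mulmxDr mxtraceD. Qed.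
Lemma frobDl X Y Z : frob (Y + Z) X = frob Y X + frob Z X.
Proof. by rewrite /frob linearD /= mulmxDl mxtraceD. Qed.
Lemma frobZr (a : R) X Y : frob X (a *: Y) = a * frob X Y.
Proof. by rewrite /frob -scalemxAr mxtraceZ. Qed.
Lemma frobNr X Y : frob X (- Y) = - frob X Y.
Proof. by rewrite -scaleN1r frobZr mulN1r. Qed.
Lemma frob_sym X Y : frob X Y = frob Y X.
Proof. by rewrite /frob -mxtrace_tr trmx_mul trmxK. Qed.
Lemma frobA_mv A X Y : A^T = A -> frob (A *m X) Y = frob X (A *m Y).
Proof. by move=> AT; rewrite /frob trmx_mul AT mulmxA. Qed.

Lemma psd_frob A X : (forall x : 'cV[R]_n, x != 0 -> 0 < (x^T *m A *m x) 0 0) ->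
  0 <= frob (A *m X) X.
Proof.
move=> pd; rewrite /frob trmx_mul.
have -> : \tr (X^T *m A^T *m X) = \sum_j ((col j X)^T *m A^T *m col j X) 0 0.
  rewrite /mxtrace; apply: eq_bigr => j _; rewrite !mxE; apply: eq_bigr => l _.
  rewrite !mxE; congr (_ * _); apply: eq_bigr => k _; by rewrite !mxE.
apply: sumr_ge0 => j _.
have pdT : forall x : 'cV[R]_n, x != 0 -> 0 < (x^T *m A^T *m x) 0 0.
  move=> x /pd; have e : (x^T *m A *m x) 0 0 = ((x^T *m A *m x)^T) 0 0 by rewrite [RHS]mxE.
  rewrite e.
  by rewrite !trmx_mul trmxK mulmxA.
case: (eqVneq (col j X) 0) => [->|nz]; last exact/ltW/pdT.
by rewrite mulmx0 mxE.
Qed.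

Lemma kryl_sub A G i X Y : in_krylov2 A G i X -> in_krylov2 A G i Y ->
  in_krylov2 A G i (X - Y).
Proof.
move=> [c ->] [d ->]; exists (fun k => c k - d k).
rewrite -sumrB; apply: eq_bigr => k _; by rewrite scalerBl.
Qed.
Lemma kryl_scale A G i (a : R) X : in_krylov2 A G i X -> in_krylov2 A G i (a *: X).
Proof.
move=> [c ->]; exists (fun k => a * c k).
rewrite scaler_sumr; apply: eq_bigr => k _; by rewrite scalerA.
Qed.

End Aux.

Theorem theorem3 (R : rcfType) (n : nat) (A M0 : 'M[R]_n) (i : nat) (Mi : 'M[R]_n) :
  spd A -> (1 <= i)%N ->
  let R0 := 1%:M - A *m M0 in
  let G0 := - (A *m R0) in
  in_krylov2 A G0 i (Mi - M0) ->
  (perp_krylov2 A G0 i (1%:M - A *m Mi) <->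
   forall M : 'M[R]_n, in_krylov2 A G0 i (M - M0) ->
     normFA A (invmx A - Mi) <= normFA A (invmx A - M)).
Proof.
move=> [AT pd] _ R0 G0 Ki.
have uA : A \in unitmx.
  rewrite unitmxE unitfE; apply/negP => /det0P [v vnz vA].
  have := pd v^T; rewrite trmx_eq0 => /(_ vnz); rewrite trmxK vA mul0mx mxE.
  by rewrite ltxx.
set E := invmx A - Mi.
have AE : A *m E = 1%:M - A *m Mi by rewrite /E mulmxBr mulmxV.
have q0 : forall X, 0 <= frob (A *m X) X by move=> X; exact: psd_frob.
have decomp : forall M, invmx A - M = E + (Mi - M).
  by move=> M; rewrite /E addrA subrK.
clearbody E.
have expand : forall D, frobA A (E + D) (E + D) =
    frobA A E E + 2 * frob (1%:M - A *m Mi) D + frobA A D D.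
  move=> D; rewrite /frobA mulmxDr frobDl !frobDr -AE.
  rewrite (@frobA_mv _ _ _ D E AT) (frob_sym D) mulr2n mulrDl mul1r; ring.
split.
- move=> perp M KM.
  have KD : in_krylov2 A G0 i (Mi - M).
    by have := kryl_sub Ki KM; rewrite opprB addrA subrK.
  rewrite /normFA decomp expand (perp _ KD) mulr0 addr0.
  rewrite ler_sqrt ?lerDl ?addr_ge0 //; exact: q0.
- move=> hmin X KX.
  set b := frob (1%:M - A *m Mi) X; set a := frobA A X X.
  have a0 : 0 <= a by exact: q0.
  have key : forall t : R, 0 <= 2 * (t * b) + t ^+ 2 * a.
    move=> t.
    have KM : in_krylov2 A G0 i ((Mi - t *: X) - M0).
      have := kryl_sub Ki (kryl_scale t KX).
      by rewrite addrAC.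
    have e : Mi - (Mi - t *: X) = t *: X by rewrite opprB addrC subrK.
    have := hmin _ KM; rewrite /normFA decomp e expand.
    rewrite ler_sqrt; last by rewrite -expand; exact: q0.
    rewrite -addrA lerDl frobZr -/b.
    have -> : frobA A (t *: X) (t *: X) = t ^+ 2 * a.
      rewrite /frobA -scalemxAr frobZr frob_sym frobZr frob_sym -/(frobA A X X) -/a.
      by rewrite mulrA -expr2.
    by [].
  pose t := - b / (a + 1).
  have a1 : a + 1 != 0 by rewrite gt_eqF // ltr_wpDl.
  have h := key t.
  have e : (a + 1) ^+ 2 * (2 * (t * b) + t ^+ 2 * a) = - (b ^+ 2 * (a + 2)).
    rewrite /t; field; exact: a1.
  have : 0 <= (a + 1) ^+ 2 * (2 * (t * b) + t ^+ 2 * a) by rewrite mulr_ge0 ?sqr_ge0.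
  rewrite e oppr_ge0 => hb.
  have : b ^+ 2 * (a + 2) == 0.
    by rewrite eq_le hb mulr_ge0 ?sqr_ge0 // addr_ge0.
  rewrite mulf_eq0 expf_eq0 /= (gt_eqF (ltr_wpDl a0 _)) ?orbF //.
  by move/eqP.
Qed.
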